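(* Let $E$ be a Banach $f$-algebra with order continuous norm and with a multiplicative unit $e$, and let $(x_n)$ be a decreasing sequence in $E$. Then $x_n\xrightarrow{mw}0$ if and only if $|x_n|(u\wedge e)\to0$ weakly for every $u\in E_+$.
   Context: All vector lattices are real and Archimedean. An $f$-algebra is a vector lattice with an associative multiplication making it an algebra, such that products of positive elements are positive and $x\wedge y=0$ implies $(xz)\wedge y=(zx)\wedge y=0$ for all $z\ge0$. A Banach $f$-algebra is an $f$-algebra which is a Banach lattice with $\|xy\|\le\|x\|\|y\|$. A net $(x_\alpha)$ in $E$ $mw$-converges to $x$ ($x_\alpha\xrightarrow{mw}x$) if $|x_\alpha-x|u\to0$ weakly for every $u\in E_+$. *)

(* Defs.v *)
From HB Require Import structures.
From mathcomp Require Import all_boot all_order all_algebra.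
From mathcomp Require Import all_classical all_reals all_analysis.
Set Implicit Arguments. Unset Strict Implicit. Unset Printing Implicit Defensive.
Import Order.TTheory GRing.Theory Num.Theory.
Import numFieldNormedType.Exports.
Local Open Scope ring_scope.
Local Open Scope classical_set_scope.

Section BFA.
Variables (R : realType) (E : completeNormedModType R).

Record banach_f_algebra := BanachFAlgebra {
  bfa_le : E -> E -> Prop;
  bfa_join : E -> E -> E;
  bfa_meet : E -> E -> E;
  bfa_mul : E -> E -> E;
  le_refl : forall x, bfa_le x x;
  le_anti : forall x y, bfa_le x y -> bfa_le y x -> x = y;
  le_trans : forall x y z, bfa_le x y -> bfa_le y z -> bfa_le x z;
  le_add : forall x y z, bfa_le x y -> bfa_le (x + z) (y + z);
  le_scale : forall (a : R) x y, 0 <= a -> bfa_le x y -> bfa_le (a *: x) (a *: y);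
  join_ub_l : forall x y, bfa_le x (bfa_join x y);
  join_ub_r : forall x y, bfa_le y (bfa_join x y);
  join_least : forall x y z, bfa_le x z -> bfa_le y z -> bfa_le (bfa_join x y) z;
  meet_lb_l : forall x y, bfa_le (bfa_meet x y) x;
  meet_lb_r : forall x y, bfa_le (bfa_meet x y) y;
  meet_greatest : forall x y z, bfa_le z x -> bfa_le z y -> bfa_le z (bfa_meet x y);
  archimedean : forall x y, bfa_le 0 x -> (forall n : nat, bfa_le (n%:R *: x) y) -> x = 0;
  norm_lattice : forall x y, bfa_le (bfa_join x (- x)) (bfa_join y (- y)) -> `|x| <= `|y|;
  mulA : forall x y z, bfa_mul x (bfa_mul y z) = bfa_mul (bfa_mul x y) z;
  mulDl : forall x y z, bfa_mul (x + y) z = bfa_mul x z + bfa_mul y z;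
  mulDr : forall x y z, bfa_mul x (y + z) = bfa_mul x y + bfa_mul x z;
  mulZl : forall (a : R) x y, bfa_mul (a *: x) y = a *: bfa_mul x y;
  mulZr : forall (a : R) x y, bfa_mul x (a *: y) = a *: bfa_mul x y;
  mul_ge0 : forall x y, bfa_le 0 x -> bfa_le 0 y -> bfa_le 0 (bfa_mul x y);
  f_disj : forall x y z, bfa_meet x y = 0 -> bfa_le 0 z ->
     bfa_meet (bfa_mul x z) y = 0 /\ bfa_meet (bfa_mul z x) y = 0;
  norm_mul : forall x y, `|bfa_mul x y| <= `|x| * `|y|
}.

Variable B : banach_f_algebra.

Definition babs (x : E) : E := bfa_join B x (- x).

Definition bpos (x : E) : Prop := bfa_le B 0 x.

Definition is_mul_unit (e : E) : Prop :=
  forall x, bfa_mul B e x = x /\ bfa_mul B x e = x.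

Definition order_continuous_norm : Prop :=
  forall (I : Type) (r : I -> I -> Prop) (x : I -> E),
    inhabited I ->
    (forall i, r i i) ->
    (forall i j k, r i j -> r j k -> r i k) ->
    (forall i j, exists k, r i k /\ r j k) ->
    (forall i j, r i j -> bfa_le B (x j) (x i)) ->
    (forall i, bfa_le B 0 (x i)) ->
    (forall z, (forall i, bfa_le B z (x i)) -> bfa_le B z 0) ->
    forall eps : R, 0 < eps -> exists i0, forall i, r i0 i -> `|x i| < eps.

Definition cont_functional (f : E -> R) : Prop :=
  (forall x y, f (x + y) = f x + f y) /\
  (forall (a : R) x, f (a *: x) = a * f x) /\
  continuous f.

Definition weak_cvg0 (y : nat -> E) : Prop :=
  forall f, cont_functional f -> (fun n => f (y n)) @ \oo --> (0 : R).

Definition mw_cvg0 (x : nat -> E) : Prop :=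
  forall u, bpos u -> weak_cvg0 (fun n => bfa_mul B (babs (x n - 0)) u).

End BFA.

(* Main.v *)
Require Import Defs.
From mathcomp Require Import all_boot all_order all_algebra.
From mathcomp Require Import all_classical all_reals all_analysis.
Import Order.TTheory GRing.Theory Num.Theory.
Import numFieldNormedType.Exports.
Local Open Scope ring_scope.

Section Helpers.
Variables (R : realType) (E : completeNormedModType R) (B : banach_f_algebra E).

Lemma mulNl_ y u : bfa_mul B (- y) u = - bfa_mul B y u.
Proof. by rewrite -scaleN1r mulZl scaleN1r. Qed.

Lemma mulBl_ y z u : bfa_mul B (y - z) u = bfa_mul B y u - bfa_mul B z u.
Proof. by rewrite mulDl mulNl_. Qed.

Lemma mulBr_ a v c : bfa_mul B a v = bfa_mul B a (v + c) - bfa_mul B a c.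
Proof. by rewrite mulDr addrK. Qed.

Lemma mulr_cont u : continuous (fun y => bfa_mul B y u).
Proof.
move=> y; apply/cvgrPdist_lt => eps eps0.
have k0 : 0 < eps / (`|u| + 1) by rewrite divr_gt0 // ltr_pwDr.
have := (@cvg_id _ (nbhs y)); move/cvgrPdist_lt => /(_ _ k0).
apply: filterS => z Hz.
rewrite -mulBl_; apply: le_lt_trans (norm_mul _ _ _) _.
apply: (@le_lt_trans _ _ (`|y - z| * (`|u| + 1))).
  by rewrite ler_wpM2l // lerDl.
by rewrite -ltr_pdivlMr ?ltr_pwDr.
Qed.

Lemma le_neg x y : bfa_le B x y -> bfa_le B (- y) (- x).
Proof.
move=> h; have := @le_add _ _ B _ _ (- x - y) h.
by rewrite addNKr [y + _]addrC subrK.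
Qed.

Lemma meet_id_le a b : bfa_le B a b -> bfa_meet B b a = a.
Proof.
move=> h; apply: (Defs.le_anti (b:=B)); first exact: meet_lb_r.
by apply: meet_greatest => //; apply: Defs.le_refl.
Qed.

Lemma cf_N (f : E -> R) (y : E) : cont_functional f -> f (- y) = - f y.
Proof. by move=> [_ [hZ _]]; rewrite -scaleN1r hZ mulN1r. Qed.

End Helpers.

Theorem theorem2p8 (R : realType) (E : completeNormedModType R)
  (B : banach_f_algebra E) (e : E)
  (Hoc : order_continuous_norm B) (He : is_mul_unit B e)
  (x : nat -> E) (Hdec : forall n, bfa_le B (x n.+1) (x n)) :
  mw_cvg0 B x <->
  (forall u, bpos B u -> weak_cvg0 (fun n => bfa_mul B (babs B (x n)) (bfa_meet B u e))).
Proof.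
split.
- move=> H u pu f cf.
  pose c := bfa_join B (- e) 0.
  have c0 : bpos B c by apply: join_ub_r.
  have hc : bfa_le B (- c) (bfa_meet B u e).
    apply: meet_greatest.
      by have := (@le_neg _ _ B _ _ c0); rewrite oppr0 => hc0; apply: (Defs.le_trans hc0 pu).
    by rewrite -[e]opprK; apply: (@le_neg _ _ B); apply: join_ub_l.
  have pvc : bpos B (bfa_meet B u e + c).
    by rewrite /bpos -(subrr c) addrC; apply: le_add.
  have H1 := H _ pvc f cf; have H2 := H _ c0 f cf.
  have -> : (fun n => f (bfa_mul B (babs B (x n)) (bfa_meet B u e))) =
    (fun n => f (bfa_mul B (babs B (x n - 0)) (bfa_meet B u e + c)) - f (bfa_mul B (babs B (x n - 0)) c)).
    apply/funext => n; rewrite subr0 (@mulBr_ _ _ B _ _ c).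
    by rewrite -(@cf_N _ _ f) // ; case: cf => [hD _]; rewrite hD.
  rewrite -(subrr (0:R)); exact: (cvgB H1 H2).
- move=> H u pu f cf.
  pose w := bfa_join B e 0.
  have pw : bpos B w by apply: join_ub_r.
  have hw : bfa_meet B w e = e by apply: meet_id_le; apply: join_ub_l.
  pose g := fun y => f (bfa_mul B y u).
  have cg : cont_functional g.
    case: cf => [hD [hZ hC]]; split; [|split].
    - by move=> a b; rewrite /g mulDl hD.
    - by move=> a b; rewrite /g mulZl hZ.
    - by move=> y; apply: continuous_comp; [apply: mulr_cont | apply: hC].
  have -> : (fun n => f (bfa_mul B (babs B (x n - 0)) u)) =
     (fun n => g (bfa_mul B (babs B (x n)) (bfa_meet B w e))).
    by apply/funext => n; rewrite /g hw subr0; case: (He (babs B (x n))) => _ ->.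
  exact: (H _ pw g cg).
Qed.
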